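(* Let $W$ be a channel from $\{1,\dots,m\}$ to $\{1,\dots,n\}$. Then $\Lambda(W)$ is a bounded, closed convex polytope. For each $f\in\{10,01,11\}$, the set $\{C_f(\lambda):\lambda\in\Lambda(W)\}$ is a closed interval and $\overline{C}_f(W)$ is attained at some vertex of $\Lambda(W)$. Furthermore, $\underline{C}_{11}(W)$ is also attained at some vertex of $\Lambda(W)$.
   Context: A channel from a finite set $A$ to a finite set $B$ is a row-stochastic matrix. Let $\mathcal{X}=\{1,\dots,m\}$, $\mathcal{Y}=\{1,\dots,n\}$. A deterministic channel is a 0-1 channel, identified with a map $D:\mathcal{X}\to\mathcal{Y}$; $\mathcal{D}$ is the set of all of them, $\mathrm{rank}(D)$ the matrix rank. $\Lambda(W)=\{\lambda\text{ probability distribution on }\mathcal{D}: W=\sum_D\lambda_DD\}$. For a channel $K$ and input distribution $\mu$, $I(\mu,K)=\sum_x\mu_x D(K_{x,*}\|\mu K)$ (KL divergence, base 2). For a probability distribution $\lambda$ on $\mathcal{D}$: $C_{11}(\lambda)=\sum_D\lambda_D\log_2\mathrm{rank}(D)$; $C_{01}(\lambda)=\max_{\mu}\sum_D\lambda_D I(\mu,D)$ over distributions $\mu$ on $\mathcal{X}$; $C_{10}(\lambda)=\max_\mu I(\mu,V^\lambda)$ over distributions $\mu$ on the set $\mathcal{X}^{\mathcal{D}}$ of maps $u:\mathcal{D}\to\mathcal{X}$, where $V^\lambda_{u,y}=\sum_D\lambda_D D_{u(D),y}$. $\underline{C}_f(W)=\inf_{\lambda\in\Lambda(W)}C_f(\lambda)$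 and $\overline{C}_f(W)=\sup_{\lambda\in\Lambda(W)}C_f(\lambda)$. *)

(* Defs.v *)
From HB Require Import structures.
From mathcomp Require Import all_boot all_order all_algebra.
From mathcomp Require Import all_classical all_reals all_analysis.
Set Implicit Arguments. Unset Strict Implicit. Unset Printing Implicit Defensive.
Import Order.TTheory GRing.Theory Num.Theory.
Import numFieldNormedType.Exports.
Local Open Scope classical_set_scope.
Local Open Scope ring_scope.

Section Defs.
Variable R : realType.

Definition log2 (x : R) : R := ln x / ln 2.

Definition is_distr (T : finType) (p : T -> R) : Prop :=
  (forall t, 0 <= p t) /\ \sum_t p t = 1.

Definition is_channel (A B : finType) (K : A -> B -> R) : Prop :=
  forall a, is_distr (K a).

Definition out_distr (A B : finType) (mu : A -> R) (K : A -> B -> R) (b : B) : R :=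
  \sum_a mu a * K a b.

(* I(mu, K) = sum_x mu_x D(K_x || mu K), with 0 log(...) = 0 *)
Definition mutual_info (A B : finType) (mu : A -> R) (K : A -> B -> R) : R :=
  \sum_a \sum_b
     (if mu a * K a b == 0 then 0
      else mu a * K a b * log2 (K a b / out_distr mu K b)).

(* deterministic channels X -> Y, X = 'I_m, Y = 'I_n *)
Definition detmap (m n : nat) := {ffun 'I_m -> 'I_n}.

Definition detmx (m n : nat) (D : detmap m n) : 'M[R]_(m, n) :=
  \matrix_(x < m, y < n) ((D x == y)%:R).

Definition Lam (m n : nat) (W : 'M[R]_(m, n)) : set {ffun detmap m n -> R} :=
  [set l | is_distr l /\ W = \sum_D l D *: detmx D].

Definition C11 (m n : nat) (l : {ffun detmap m n -> R}) : R :=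
  \sum_D l D * log2 (\rank (detmx D))%:R.

Definition C01 (m n : nat) (l : {ffun detmap m n -> R}) : R :=
  sup [set v | exists mu : 'I_m -> R,
         is_distr mu /\ v = \sum_D l D * mutual_info mu (fun x y => detmx D x y)].

(* V^lambda : channel from maps u : D -> X to Y *)
Definition Vl (m n : nat) (l : {ffun detmap m n -> R})
  (u : {ffun detmap m n -> 'I_m}) (y : 'I_n) : R :=
  \sum_D l D * detmx D (u D) y.

Definition C10 (m n : nat) (l : {ffun detmap m n -> R}) : R :=
  sup [set v | exists mu : {ffun detmap m n -> 'I_m} -> R,
         is_distr mu /\ v = mutual_info mu (Vl l)].

Inductive capf := f10 | f01 | f11.

Definition Cf (f : capf) (m n : nat) (l : {ffun detmap m n -> R}) : R :=
  match f with f10 => C10 l | f01 => C01 l | f11 => C11 l end.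

Definition Cset (f : capf) (m n : nat) (W : 'M[R]_(m, n)) : set R :=
  [set Cf f l | l in Lam W].

Definition Cup (f : capf) (m n : nat) (W : 'M[R]_(m, n)) : R := sup (Cset f W).
Definition Clow (f : capf) (m n : nat) (W : 'M[R]_(m, n)) : R := inf (Cset f W).

Definition is_convex (T : finType) (S : set {ffun T -> R}) : Prop :=
  forall x y t, S x -> S y -> 0 <= t <= 1 -> S (t *: x + (1 - t) *: y).

Definition is_bounded (T : finType) (S : set {ffun T -> R}) : Prop :=
  exists M : R, forall x, S x -> forall t, `|x t| <= M.

Definition is_closed (T : finType) (S : set {ffun T -> R}) : Prop :=
  forall (u : nat -> {ffun T -> R}) (x : {ffun T -> R}),
    (forall k, S (u k)) -> (forall t, ((fun k : nat => u k t) : R^nat) @ \oo --> (x t : R)) -> S x.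

Definition is_polytope (T : finType) (S : set {ffun T -> R}) : Prop :=
  exists s : seq {ffun T -> R},
    S = [set x | exists c : 'I_(size s) -> R,
           (forall i, 0 <= c i) /\ \sum_i c i = 1 /\
           x = \sum_(i < size s) c i *: nth 0 s i].

Definition is_vertex (T : finType) (S : set {ffun T -> R}) (x : {ffun T -> R}) : Prop :=
  S x /\ forall y z t, S y -> S z -> 0 < t < 1 -> x = t *: y + (1 - t) *: z -> y = z.

End Defs.

(* Main.v *)
Require Import Defs.
From HB Require Import structures.
From mathcomp Require Import all_boot all_order all_algebra.
From mathcomp Require Import all_classical all_reals all_analysis.
From mathcomp Require Import ring lra.
Import Order.TTheory GRing.Theory Num.Theory.
Import numFieldNormedType.Exports.
Local Open Scope classical_set_scope.
Local Open Scope ring_scope.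
Set Implicit Arguments. Unset Strict Implicit. Unset Printing Implicit Defensive.
Section Poly.
Variables (R : realType) (T : finType) (m n : nat) (M : T -> 'M[R]_(m,n)) (W : 'M[R]_(m,n)).

Definition LL : set {ffun T -> R} := [set l | is_distr l /\ W = \sum_D l D *: M D].

Lemma LL_ge0 l : LL l -> forall D, 0 <= l D.
Proof. by case=> [[]]. Qed.

Lemma LL_sum l : LL l -> \sum_D l D = 1.
Proof. by case=> [[]]. Qed.

Lemma LL_le1 l : LL l -> forall D, l D <= 1.
Proof.
move=> Ll D; rewrite -(LL_sum Ll) (bigD1 D) //= lerDl.
by apply: sumr_ge0 => i _; apply: LL_ge0.
Qed.

Lemma LL_comb (I : finType) (c : I -> R) (p : I -> {ffun T -> R}) :
  (forall i, 0 <= c i) -> \sum_i c i = 1 -> (forall i, LL (p i)) ->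
  LL (\sum_i c i *: p i).
Proof.
move=> c0 c1 Lp; split; first split.
- move=> D; rewrite sum_ffunE; apply: sumr_ge0 => i _; rewrite ffunE.
  by apply: mulr_ge0 => //; apply: LL_ge0.
- under eq_bigr => D _ do rewrite sum_ffunE.
  rewrite exchange_big /= -c1; apply: eq_bigr => i _.
  under eq_bigr => D _ do rewrite ffunE.
  by rewrite -mulr_sumr (LL_sum (Lp i)) mulr1.
- under eq_bigr => D _ do rewrite sum_ffunE scaler_suml.
  rewrite exchange_big /=.
  transitivity (\sum_i c i *: W); last first.
    apply: eq_bigr => i _; case: (Lp i) => _ ->; rewrite scaler_sumr.
    by apply: eq_bigr => D _; rewrite ffunE scalerA.
  by rewrite -scaler_suml c1 scale1r.
Qed.

Lemma LL_convex : is_convex LL.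
Proof.
move=> x y t Lx Ly /andP[t0 t1].
have := @LL_comb bool (fun b => if b then t else 1 - t) (fun b => if b then x else y).
rewrite !big_bool /=; apply => //; first by case=> //; rewrite subr_ge0.
  by rewrite addrC subrK.
by case.
Qed.

Lemma LL_bounded : is_bounded LL.
Proof.
exists 1 => x Lx D; rewrite ger0_norm ?LL_le1 //; exact: LL_ge0.
Qed.

End Poly.
Section CvgHelp.
Variable R : realType.

Lemma cvg_sumR (I : finType) (Tp : Type) (F : set_system Tp) {FF : Filter F}
  (f : I -> Tp -> R) (a : I -> R) :
  (forall i, f i @ F --> a i) -> (fun x => \sum_i f i x) @ F --> \sum_i a i.
Proof.
move=> h; apply: (@cvg_big R^o I +%R 0 (fun=> true)) => //.
exact: add_continuous.
Qed.

Lemma near_oo (P : nat -> Prop) : (\forall k \near \oo, P k) <-> exists N, forall k, (N <= k)%N -> P k.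
Proof.
split; first by move=> [N _ HN]; exists N => k; apply: HN.
by move=> [N HN]; exists N => // k; apply: HN.
Qed.

Lemma cvg_subseq (u : nat -> R) (l : R) (f : nat -> nat) :
  increasing_seq f -> u @ \oo --> l -> (u \o f) @ \oo --> l.
Proof.
move=> fi /cvgrPdist_lt ul; apply/cvgrPdist_lt => e e0.
have /near_oo [N HN] := ul e e0.
have fk : forall k, (k <= f k)%N.
  elim=> // k IH; apply: leq_ltn_trans IH _.
  rewrite ltnNge; apply/negP => h.
  have := fi k.+1 k; rewrite ltnn => ee.
  by move: h; change ((f k.+1 <= f k)%O -> False); rewrite ee.
by apply/near_oo; exists N => k Nk; apply: HN; apply: leq_trans Nk (fk k).
Qed.

Lemma lim_le_const (u : nat -> R) (l v : R) :
  u @ \oo --> l -> (forall e, 0 < e -> \forall k \near \oo, u k <= v + e) -> l <= v.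
Proof.
move=> ul h; rewrite leNgt; apply/negP => vl.
have e0 : 0 < (l - v) / 2 by rewrite divr_gt0 // subr_gt0.
have /near_oo [N1 H1] := h _ e0.
move/cvgrPdist_lt: ul => ul.
have /near_oo [N2 H2] := ul _ e0.
have := H1 (maxn N1 N2) (leq_maxl _ _); have := H2 (maxn N1 N2) (leq_maxr _ _).
set x := u _ => h2 h1.
have : l - x < (l - v) / 2 by apply: le_lt_trans h2; exact: ler_norm.
move: h1; set d := (l - v) / 2 => h1 h3.
have dd : l - v = d + d by rewrite /d -splitr.
have : l < l by rewrite -[ltRHS](subrK v) dd; lra.
by rewrite ltxx.
Qed.

Lemma cvg_uniqR (f : nat -> R) (a b : R) : f @ \oo --> a -> f @ \oo --> b -> a = b.
Proof. move=> ha hb; exact: (cvg_unique (@norm_hausdorff _ R^o) ha hb). Qed.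

End CvgHelp.

Section Closed.
Variables (R : realType) (T : finType) (m n : nat) (M : T -> 'M[R]_(m,n)) (W : 'M[R]_(m,n)).

Lemma LL_closed : is_closed (LL M W).
Proof.
move=> u x Lu ux; split; first split.
- move=> D; rewrite leNgt; apply/negP => xD.
  have := cvgr_lt _ (ux D) _ xD; move=> /(_ _)/near_oo [N HN].
  have := HN N (leqnn _); rewrite ltNge (LL_ge0 (Lu N)) //.
- have h := cvg_sumR (FF := eventually_filter) ux.
  have e : (fun k => \sum_t u k t) = fun=> 1.
    by apply: funext => k; rewrite (LL_sum (Lu k)).
  rewrite e in h; apply/esym; apply: (cvg_uniqR _ h); exact: cvg_cst.
- apply/matrixP => i j; rewrite summxE.
  have h := cvg_sumR (FF := eventually_filter) (fun D => @cvgMr_tmp _ _ _ eventually_filter _ _ (M D i j) (ux D)).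
  have e : (fun k => \sum_D u k D * M D i j) = fun=> W i j.
    apply: funext => k; case: (Lu k) => _ ->; rewrite summxE.
    by apply: eq_bigr => D _; rewrite mxE.
  rewrite e in h; rewrite (cvg_uniqR (cvg_cst (W i j)) h).
  by apply: eq_bigr => D _; rewrite mxE.
Qed.

End Closed.
Section Hull.
Variables (R : realType) (T : finType) (m n : nat) (M : T -> 'M[R]_(m,n)) (W : 'M[R]_(m,n)).
Local Notation LL := (LL M W).

Definition supp (x : {ffun T -> R}) : {set T} := [set D | x D != 0].
Definition LS (S : {set T}) : set {ffun T -> R} :=
  [set l | LL l /\ forall D, D \notin S -> l D = 0].
Definition uniqS (S : {set T}) : Prop := exists l, LS S l /\ forall l', LS S l' -> l' = l.
Definition ptS (S : {set T}) : {ffun T -> R} := xget (0 : {ffun T -> R}) (LS S).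
Definition sS : seq {ffun T -> R} :=
  map ptS (seq.filter (fun S => `[< uniqS S >]) (enum {set T})).

Lemma pt_LS S : uniqS S -> LS S (ptS S).
Proof. by move=> [l [Ll _]]; apply: xgetPex; exists l. Qed.

Lemma pt_uniq S y : uniqS S -> LS S y -> y = ptS S.
Proof.
move=> uS Ly; have := pt_LS uS; case: uS => l [_ hl] /hl ->; exact: hl.
Qed.

Lemma sSP v : v \in sS -> exists2 S, uniqS S & v = ptS S.
Proof.
by move=> /mapP [S]; rewrite mem_filter => /andP [/asboolP uS _] ->; exists S.
Qed.

Lemma sS_LL v : v \in sS -> LL v.
Proof. by move=> /sSP [S uS ->]; case: (pt_LS uS). Qed.

Lemma sS_vertex v : v \in sS -> is_vertex LL v.
Proof.
move=> /sSP [S uS ->]; split; first by case: (pt_LS uS).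
move=> y z t Ly Lz /andP [t0 t1] e.
have hz : forall D, D \notin S -> y D = 0 /\ z D = 0.
  move=> D DS; have := (pt_LS uS).2 D DS; rewrite e !ffunE.
  have y0 := LL_ge0 Ly D; have z0 := LL_ge0 Lz D.
  have ty : 0 <= t * y D by rewrite mulr_ge0 // ltW.
  have tz : 0 <= (1 - t) * z D by rewrite mulr_ge0 // subr_ge0 ltW.
  move/eqP; rewrite paddr_eq0 // => /andP [/eqP h1 /eqP h2].
  move: h1 h2 => /eqP; rewrite mulf_eq0 (gt_eqF t0) /= => /eqP ->.
  move/eqP; rewrite mulf_eq0 subr_eq0 (gt_eqF t1) /= => /eqP -> //.
rewrite (pt_uniq uS (y := y)); last by split => // D /hz [].
by rewrite (pt_uniq uS (y := z)) //; split => // D /hz [].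
Qed.

Lemma LL_dir x (d : {ffun T -> R}) s : LL x -> \sum_D d D = 0 -> \sum_D d D *: M D = 0 ->
  (forall D, 0 <= x D + s * d D) -> LL (x + s *: d).
Proof.
move=> Lx d0 dM0 pos; split; first split.
- by move=> D; rewrite !ffunE.
- under eq_bigr => D _ do rewrite !ffunE.
  by rewrite big_split /= -mulr_sumr d0 mulr0 addr0 (LL_sum Lx).
- under eq_bigr => D _ do rewrite !ffunE scalerDl -scalerA.
  by rewrite big_split /= -scaler_sumr dM0 scaler0 addr0; case: Lx.
Qed.

Lemma step x (d : {ffun T -> R}) D1 : LL x -> \sum_D d D = 0 -> \sum_D d D *: M D = 0 ->
  (forall D, x D = 0 -> d D = 0) -> d D1 < 0 ->
  exists s, [/\ 0 < s, LL (x + s *: d) & (#|supp (x + s *: d)%R| < #|supp x|)%N].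
Proof.
move=> Lx d0 dM0 xd dD1.
case: (@arg_minP _ _ _ D1 (fun D => d D < 0) (fun D => x D / - d D) dD1).
move=> D0 dD0 minD.
have xD0 : 0 < x D0.
  rewrite lt_def (LL_ge0 Lx) andbT; apply/eqP => /xd h; by rewrite h ltxx in dD0.
have nd0 : 0 < - d D0 by rewrite oppr_gt0.
set s := x D0 / - d D0.
have s0 : 0 < s by rewrite divr_gt0.
have pos : forall D, 0 <= x D + s * d D.
  move=> D; case: (ltP (d D) 0) => dD.
    have := minD D dD; rewrite -/s => hs.
    have ndD : 0 < - d D by rewrite oppr_gt0.
    move: hs; rewrite ler_pdivlMr // => hs; lra.
  by rewrite addr_ge0 ?(LL_ge0 Lx) // mulr_ge0 // ltW.
exists s; split => //; first exact: LL_dir.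
have yD0 : (x + s *: d) D0 = 0.
  have hn : d D0 != 0 by rewrite lt_eqF.
  have sc : forall a b : R, a *: b = a * b by [].
  rewrite !ffunE sc /s; field; exact: hn.
have sub : supp (x + s *: d) \subset supp x :\ D0.
  apply/fintype.subsetP => D; rewrite !inE => hD; apply/andP; split.
    by apply: contraNneq hD => ->; rewrite yD0.
  apply: contraNneq hD => /eqP; rewrite !ffunE => /eqP xD.
  by rewrite xD (xd _ xD) scaler0 addr0.
rewrite (cardsD1 D0 (supp x)) inE (gt_eqF xD0) /= add1n ltnS.
exact: subset_leq_card.
Qed.

Lemma neg_exists (d : {ffun T -> R}) : \sum_D d D = 0 -> d != 0 -> exists D, d D < 0.
Proof.
move=> d0 dn0; apply: contrapT => hn; move/negP: dn0; apply; apply/eqP/ffunP => D.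
rewrite ffunE; apply: (psumr_eq0P (P := predT)) => // i _.
by rewrite leNgt; apply/negP => h; apply: hn; exists i.
Qed.

Definition hullP x := exists c : 'I_(size sS) -> R,
  [/\ forall i, 0 <= c i, \sum_i c i = 1 & x = \sum_i c i *: nth 0 sS i].

Lemma hull_aux k x : LL x -> (#|supp x| < k)%N -> hullP x.
Proof.
elim: k x => // k IH x Lx hk.
have LSx : LS (supp x) x by split => // D; rewrite inE negbK => /eqP.
have [uS|nuS] := pselect (uniqS (supp x)).
  have xin : x \in sS.
    rewrite (pt_uniq uS LSx); apply: map_f.
    by rewrite mem_filter mem_enum andbT; apply/asboolP.
  have xi : (index x sS < size sS)%N by rewrite index_mem.
  set i0 := Ordinal xi.
  exists (fun i => (i == i0)%:R); split.
  - by move=> i; rewrite ler0n.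
  - by rewrite (bigD1 i0) //= eqxx big1 ?addr0 // => i /negbTE ->.
  - rewrite (bigD1 i0) //= eqxx scale1r big1 ?addr0; first by rewrite nth_index.
    by move=> i /negbTE ->; rewrite scale0r.
have [y [LSy yx]] : exists y, LS (supp x) y /\ y <> x.
  apply: contrapT => hn; apply: nuS; exists x; split => // l' Ll'.
  by apply: contrapT => h; apply: hn; exists l'.
case: LSy => Ly ySx.
set d := y - x.
have dD : forall D, d D = y D - x D by move=> D; rewrite !ffunE.
have d0 : \sum_D d D = 0.
  under eq_bigr => D _ do rewrite dD.
  by rewrite sumrB (LL_sum Ly) (LL_sum Lx) subrr.
have dM0 : \sum_D d D *: M D = 0.
  under eq_bigr => D _ do rewrite dD scalerBl.
  by rewrite sumrB; case: Ly => _ <-; case: Lx => _ <-; rewrite subrr.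
have xd : forall D, x D = 0 -> d D = 0.
  by move=> D xD; rewrite dD xD ySx ?subrr // inE negbK xD.
have dn0 : d != 0 by rewrite subr_eq0; apply/eqP.
have [D1 hD1] := neg_exists d0 dn0.
have [D2 hD2] : exists D, (- d) D < 0.
  apply: neg_exists; last by rewrite oppr_eq0.
  under eq_bigr => D _ do rewrite ffunE.
  by rewrite sumrN d0 oppr0.
have [s1 [s10 L1 c1]] := step Lx d0 dM0 xd hD1.
have nd0 : \sum_D (- d) D = 0.
  by under eq_bigr => D _ do rewrite ffunE; rewrite sumrN d0 oppr0.
have ndM0 : \sum_D (- d) D *: M D = 0.
  by under eq_bigr => D _ do rewrite ffunE scaleNr; rewrite sumrN dM0 oppr0.
have nxd : forall D, x D = 0 -> (- d) D = 0.
  by move=> D xD; rewrite [LHS]ffunE (xd _ xD) oppr0.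
have [s2 [s20 L2 c2]] := step Lx nd0 ndM0 nxd hD2.
have [a1 [a10 a11 e1]] := IH _ L1 (leq_trans c1 (ltnSE hk)).
have [a2 [a20 a21 e2]] := IH _ L2 (leq_trans c2 (ltnSE hk)).
have ss0 : 0 < s1 + s2 by rewrite addr_gt0.
set al := s2 / (s1 + s2); set be := s1 / (s1 + s2).
have al0 : 0 <= al by rewrite divr_ge0 // ltW.
have be0 : 0 <= be by rewrite divr_ge0 // ltW.
have albe : al + be = 1 by rewrite /al /be -mulrDl addrC divff // gt_eqF.
exists (fun i => al * a1 i + be * a2 i); split.
- by move=> i; rewrite addr_ge0 // mulr_ge0.
- by rewrite big_split /= -!mulr_sumr a11 a21 !mulr1.
- under eq_bigr => i _ do rewrite scalerDl -!scalerA.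
  rewrite big_split /= -!scaler_sumr -e1 -e2.
  apply/ffunP => D; rewrite !ffunE /al /be.
  have hs : s1 + s2 != 0 by rewrite gt_eqF.
  have sc : forall a b : R, a *: b = a * b by [].
  by rewrite !sc; field.
Qed.

Lemma hull x : LL x -> hullP x.
Proof. by move=> Lx; apply: (@hull_aux #|supp x|.+1). Qed.

Lemma LL_polytope : is_polytope LL.
Proof.
exists sS; apply/seteqP; split => x.
  by move=> /hull [c [c0 c1 ->]]; exists c.
move=> [c [c0 [c1 ->]]]; apply: LL_comb => // i.
by apply: sS_LL; apply: mem_nth.
Qed.

End Hull.
Section MultiBW.
Variables (R : realType) (T : finType).

Lemma bounded_seq (v : nat -> R) B : (forall k, `|v k| <= B) -> bounded_fun v.
Proof.
move=> hB; exists B; split; first exact: num_real.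
move=> M hM k _ /=; apply: le_trans (hB k) (ltW hM).
Qed.

Lemma multi_bw (s : seq T) (u : nat -> {ffun T -> R}) (B : R) :
  (forall k t, `|u k t| <= B) ->
  exists f : nat -> nat, increasing_seq f /\
    forall t, t \in s -> exists l : R, (fun k => u (f k) t) @ \oo --> l.
Proof.
move=> hB; elim: s => [|t s [f [fi hf]]].
  by exists id; split.
have [g gi cg] := bolzano_weierstrass (bounded_seq (fun k => hB (f k) t)).
exists (f \o g); split.
  by move=> a b /=; rewrite fi; exact: gi.
move=> t'; rewrite inE => /orP [/eqP ->|t's].
  by move/cvg_ex: cg => [l hl]; exists l.
have [l hl] := hf _ t's; exists l.
exact: (cvg_subseq (u := fun k => u (f k) t') gi hl).
Qed.

End MultiBW.
Lemma natSinv_ev (R : realType) (e : R) : 0 < e ->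
  exists N, forall k, (N <= k)%N -> k.+1%:R^-1 < e.
Proof. by move=> e0; apply/near_oo; exact: (near_infty_natSinv_lt (PosNum e0)). Qed.

Lemma incr_ge (f : nat -> nat) : increasing_seq f -> forall k, (k <= f k)%N.
Proof.
move=> fi; elim=> // k IH; apply: leq_ltn_trans IH _.
rewrite ltnNge; apply/negP => h.
have := fi k.+1 k; rewrite ltnn => ee.
by move: h; change ((f k.+1 <= f k)%O -> False); rewrite ee.
Qed.

Section Generic.
Variables (R : realType) (T : finType) (m n : nat) (M : T -> 'M[R]_(m,n)) (W : 'M[R]_(m,n)).
Local Notation LL := (LL M W).
Variable C : {ffun T -> R} -> R.
Hypothesis LLne : exists x, LL x.

Definition Jensen := forall (I : finType) (c : I -> R) (p : I -> {ffun T -> R}),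
  (forall i, 0 <= c i) -> \sum_i c i = 1 -> (forall i, LL (p i)) ->
  C (\sum_i c i *: p i) <= \sum_i c i * C (p i).

Definition RevJensen := forall (I : finType) (c : I -> R) (p : I -> {ffun T -> R}),
  (forall i, 0 <= c i) -> \sum_i c i = 1 -> (forall i, LL (p i)) ->
  \sum_i c i * C (p i) <= C (\sum_i c i *: p i).

Definition Lsc := forall (u : nat -> {ffun T -> R}) (x : {ffun T -> R}) (v : R),
  (forall k, LL (u k)) -> LL x -> (forall t, (fun k => u k t) @ \oo --> x t) ->
  (forall e, 0 < e -> \forall k \near \oo, C (u k) <= v + e) -> C x <= v.

Lemma sS_ne : (0 < size (sS M W))%N.
Proof.
case: LLne => x /(hull (M := M)) [c [_ c1 _]].
rewrite lt0n; apply/negP => /eqP h; move: c1; move: c; rewrite h => c.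
by rewrite big_ord0 => /eqP; rewrite eq_sym oner_eq0.
Qed.

Lemma max_vertex : Jensen ->
  exists v, is_vertex LL v /\ forall l, LL l -> C l <= C v.
Proof.
move=> HJ; set s := sS M W.
have i0 : 'I_(size s) := Ordinal sS_ne.
case: (@arg_maxP _ _ _ i0 xpredT (fun i => C (nth 0 s i)) isT) => imax _ hmax.
have vin : nth 0 s imax \in s by apply: mem_nth.
exists (nth 0 s imax); split; first exact: sS_vertex.
move=> l /(hull (M := M)) [c [c0 c1 ->]].
apply: le_trans (HJ _ _ _ c0 c1 (fun i => sS_LL (mem_nth 0 (ltn_ord i)))) _.
rewrite -[X in _ <= X]mul1r -c1 mulr_suml; apply: ler_sum => i _.
by apply: ler_wpM2l => //; apply: hmax.
Qed.

Lemma min_vertex : RevJensen ->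
  exists v, is_vertex LL v /\ forall l, LL l -> C v <= C l.
Proof.
move=> HJ; set s := sS M W.
have i0 : 'I_(size s) := Ordinal sS_ne.
case: (@arg_minP _ _ _ i0 xpredT (fun i => C (nth 0 s i)) isT) => imin _ hmin.
have vin : nth 0 s imin \in s by apply: mem_nth.
exists (nth 0 s imin); split; first exact: sS_vertex.
move=> l /(hull (M := M)) [c [c0 c1 ->]].
apply: le_trans (HJ _ _ _ c0 c1 (fun i => sS_LL (mem_nth 0 (ltn_ord i)))).
rewrite -[X in X <= _]mul1r -c1 mulr_suml; apply: ler_sum => i _.
by apply: ler_wpM2l => //; apply: hmin.
Qed.

Lemma Jensen2 : Jensen -> forall x y a, LL x -> LL y -> 0 <= a <= 1 ->
  C (a *: x + (1 - a) *: y) <= a * C x + (1 - a) * C y.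
Proof.
move=> HJ x y a Lx Ly /andP [a0 a1].
have := HJ bool (fun b => if b then a else 1 - a) (fun b => if b then x else y).
rewrite !big_bool /=; apply => //; first by case=> //; rewrite subr_ge0.
  by rewrite addrC subrK.
by case.
Qed.

Lemma min_exists : Lsc -> (exists B, forall l, LL l -> - B <= C l) ->
  exists xm, LL xm /\ forall l, LL l -> C xm <= C l.
Proof.
move=> HL [B hB].
set S := [set C l | l in LL].
have S0 : S !=set0 by case: LLne => x Lx; exists (C x), x.
have Slb : has_lbound S by exists (- B) => _ [l Ll <-]; apply: hB.
set i := inf S.
have hk : forall k : nat, exists l, LL l /\ C l < i + k.+1%:R^-1.
  move=> k; have : i < i + k.+1%:R^-1 by rewrite ltrDl invr_gt0 ltr0Sn.
  by move/(inf_lt S0) => [_ [l Ll <-] hl]; exists l.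
have [u hu] := choice hk.
have ub : forall k t, `|u k t| <= 1.
  by move=> k t; rewrite ger0_norm ?(LL_ge0 (hu k).1) // (LL_le1 (hu k).1).
have [f [fi hf]] := multi_bw (enum T) ub.
have [lt hlt] := choice (fun t => hf t (mem_enum T t)).
set x := [ffun t => lt t].
have ux : forall t, (fun k => u (f k) t) @ \oo --> x t.
  by move=> t; rewrite ffunE; exact: hlt.
have Lx : LL x := LL_closed (u := fun k => u (f k)) (fun k => (hu (f k)).1) ux.
exists x; split => // l Ll.
apply: le_trans (ge_inf Slb (ex_intro2 _ _ l Ll erefl)).
apply: (HL (fun k => u (f k))) => // [k|e e0]; first exact: (hu (f k)).1.
have [N HN] := natSinv_ev e0; apply/near_oo; exists N => k Nk.
apply: ltW; apply: lt_le_trans (hu (f k)).2 _; rewrite lerD2l; apply: ltW.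
apply: le_lt_trans (HN _ Nk); rewrite lef_pV2 ?posrE ?ltr0Sn // ler_nat ltnS.
exact: incr_ge.
Qed.

End Generic.
Section Ivt.
Variables (R : realType) (T : finType) (m n : nat) (M : T -> 'M[R]_(m,n)) (W : 'M[R]_(m,n)).
Local Notation LL := (LL M W).
Variable C : {ffun T -> R} -> R.

Lemma cvg_affine (tk : nat -> R) (t0 a b : R) : tk @ \oo --> t0 ->
  (fun k => tk k * a + (1 - tk k) * b) @ \oo --> t0 * a + (1 - t0) * b.
Proof.
move=> h; apply: cvgD.
  exact: (@cvgMr_tmp _ _ _ eventually_filter _ _ a h).
apply: (@cvgMr_tmp _ _ _ eventually_filter _ _ b).
apply: cvgB => //; exact: cvg_cst.
Qed.

Lemma ivt_C : Jensen M W C -> Lsc M W C -> forall xm v w, LL xm -> LL v ->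
  C xm <= w <= C v -> exists l, LL l /\ C l = w.
Proof.
move=> HJ HL xm v w Lxm Lv /andP [hw1 hw2].
pose z t := t *: v + (1 - t) *: xm.
have zD : forall t D, z t D = t * v D + (1 - t) * xm D by move=> t D; rewrite !ffunE.
have Lz : forall t, 0 <= t <= 1 -> LL (z t) by move=> t ht; exact: LL_convex.
have z1 : z 1 = v by rewrite /z subrr scale0r addr0 scale1r.
have z0 : z 0 = xm by rewrite /z subr0 scale0r add0r scale1r.
set S := [set t | (0 <= t <= 1) /\ C (z t) <= w].
have S0 : S 0 by split; [rewrite lexx ler01 | rewrite z0].
have Sub : ubound S 1 by move=> t [/andP [_ ->]].
have hS : has_sup S by split; [exists 0 | exists 1].
set ts := sup S.
have ts0 : 0 <= ts by apply: ub_le_sup => //; exists 1.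
have ts1 : ts <= 1 by apply: ge_sup => //; exists 0.
have tsI : 0 <= ts <= 1 by rewrite ts0 ts1.
have A : C (z ts) <= w.
  have hk : forall k : nat, exists t, S t /\ ts - k.+1%:R^-1 < t.
    move=> k; have e0 : 0 < k.+1%:R^-1 :> R by rewrite invr_gt0 ltr0Sn.
    by have [t St ht] := sup_adherent e0 hS; exists t.
  have [tk htk] := choice hk.
  have tkc : tk @ \oo --> ts.
    apply/cvgrPdist_lt => e e0; have [N HN] := natSinv_ev e0.
    apply/near_oo; exists N => k Nk.
    have tkle : tk k <= ts by apply: ub_le_sup => //; [exists 1 | exact: (htk k).1].
    rewrite ger0_norm ?subr_ge0 //; apply: lt_trans (HN _ Nk).
    by move: (htk k).2; rewrite !ltrBlDr [_ + tk k]addrC.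
  apply: (HL (fun k => z (tk k))) => //.
  - by move=> k; apply: Lz; case: (htk k) => [[]].
  - by apply: Lz.
  - by move=> D; rewrite zD; under eq_cvg do rewrite zD; exact: cvg_affine.
  - move=> e e0; apply/near_oo; exists 0%N => k _.
    by case: (htk k) => [[_ h] _]; apply: le_trans h _; rewrite lerDl ltW.
exists (z ts); split; first exact: Lz.
apply/eqP; rewrite eq_le A /=; rewrite leNgt; apply/negP => hlt.
have tsn1 : ts < 1.
  rewrite lt_neqAle ts1 andbT; apply/negP => /eqP e1.
  by move: hlt; rewrite e1 z1 ltNge hw2.
set hs := C (z ts).
have bh : 0 < C v - hs by rewrite subr_gt0; apply: lt_le_trans hw2.
set de := (w - hs) / (C v - hs).
have de0 : 0 < de by rewrite divr_gt0 // subr_gt0.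
have de1 : de <= 1 by rewrite ler_pdivrMr // mul1r lerD2r.
set t' := ts + de * (1 - ts).
have zt' : z t' = de *: v + (1 - de) *: z ts.
  apply/ffunP => D; rewrite !ffunE /t'.
  have sc : forall a b : R, a *: b = a * b by [].
  rewrite !sc; ring.
have Ct' : C (z t') <= w.
  rewrite zt'; apply: le_trans (Jensen2 HJ Lv (Lz _ tsI) _) _.
    by rewrite de1 ltW.
  rewrite /de -/hs; have hn : C v - hs != 0 by rewrite gt_eqF.
  have -> : (w - hs) / (C v - hs) * C v + (1 - (w - hs) / (C v - hs)) * hs = w.
    by field.
  by [].
have t'I : 0 <= t' <= 1.
  apply/andP; split.
    by rewrite /t' addr_ge0 // mulr_ge0 ?subr_ge0 // ltW.
  have h : de * (1 - ts) <= 1 * (1 - ts) by apply: ler_wpM2r; rewrite ?subr_ge0.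
  by rewrite /t'; move: h; rewrite mul1r -lerBrDl.
have : t' <= ts.
  apply: ub_le_sup; first by exists 1.
  exact: (conj t'I Ct').
rewrite /t' gerDl leNgt => /negP; apply.
by rewrite mulr_gt0 // subr_gt0.
Qed.

End Ivt.
Section Info.
Variable R : realType.

Definition xlnx (x : R) := x * ln x.
Definition F2 (x y : R) := if x == 0 then 0 else x * log2 (x / y).

Lemma ln2_gt0 : 0 < ln (2 : R).
Proof. by apply: ln_gt0; rewrite ltr1n. Qed.

Lemma ln_ge1V (z : R) : 0 < z -> 1 - z^-1 <= ln z.
Proof.
move=> z0; have zi : 0 < z^-1 by rewrite invr_gt0.
have h : -1 < z^-1 - 1 by lra.
have := le_ln1Dx h; rewrite addrC subrK lnV ?posrE // => h2.
lra.
Qed.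

Lemma eta_le0 x : 0 <= x <= 1 -> xlnx x <= 0.
Proof. by move=> /andP [x0 x1]; rewrite /xlnx mulr_ge0_le0 // ln_le0. Qed.

Lemma eta_ge x : 0 <= x -> x - 1 <= xlnx x.
Proof.
move=> x0; have [->|xn0] := eqVneq x 0; first by rewrite /xlnx mul0r sub0r lerN10.
have xp : 0 < x by rewrite lt_def xn0.
have := ln_ge1V xp; rewrite -(ler_pM2l xp) mulrBr mulr1 mulfV //.
Qed.

Lemma eta_bnd x : 0 <= x <= 1 -> -1 <= xlnx x <= 0.
Proof.
move=> /[dup] hx /andP [x0 x1]; rewrite eta_le0 // andbT.
by apply: le_trans (eta_ge x0); lra.
Qed.

Variables (A B : finType).

Lemma out_ge (mu : A -> R) (K : A -> B -> R) a b :
  (forall a, 0 <= mu a) -> (forall a b, 0 <= K a b) ->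
  mu a * K a b <= out_distr mu K b.
Proof.
move=> mu0 K0; rewrite /out_distr (bigD1 a) //= lerDl.
by apply: sumr_ge0 => i _; rewrite mulr_ge0.
Qed.

Lemma MI_F2 (mu : A -> R) (K : A -> B -> R) :
  mutual_info mu K = \sum_a \sum_b F2 (mu a * K a b) (mu a * out_distr mu K b).
Proof.
apply: eq_bigr => a _; apply: eq_bigr => b _; rewrite /F2.
case: ifP => // /negbT; rewrite mulf_eq0 negb_or => /andP [mu0 _].
congr (_ * log2 _); by rewrite invfM mulrACA mulfV // mul1r.
Qed.

Lemma MI_ent (mu : A -> R) (K : A -> B -> R) :
  (forall a, 0 <= mu a) -> (forall a b, 0 <= K a b) ->
  mutual_info mu K * ln 2 =
  \sum_a mu a * \sum_b xlnx (K a b) - \sum_b xlnx (out_distr mu K b).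
Proof.
move=> mu0 K0.
have term : forall a b,
  (if mu a * K a b == 0 then 0
   else mu a * K a b * log2 (K a b / out_distr mu K b)) * ln 2 =
  mu a * xlnx (K a b) - mu a * K a b * ln (out_distr mu K b).
  move=> a b; case: ifPn => [/eqP h|h].
    by rewrite /xlnx mulrA h !mul0r subrr.
  have hp : 0 < mu a * K a b by rewrite lt_def h mulr_ge0.
  have op : 0 < out_distr mu K b by apply: lt_le_trans hp (out_ge _ _ _ _).
  move: h; rewrite mulf_eq0 negb_or => /andP [mn Kn].
  have Kp : 0 < K a b by rewrite lt_def Kn K0.
  rewrite /log2 ln_div ?posrE // /xlnx -mulrA mulfVK ?gt_eqF ?ln2_gt0 //.
  by rewrite mulrBr !mulrA.
rewrite /mutual_info mulr_suml.
under eq_bigr => a _ do rewrite mulr_suml.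
under eq_bigr => a _ do under eq_bigr => b _ do rewrite term.
under eq_bigr => a _ do rewrite sumrB -mulr_sumr.
rewrite sumrB; congr (_ - _).
rewrite exchange_big /=; apply: eq_bigr => b _.
by rewrite /xlnx /out_distr mulr_suml.
Qed.

Lemma MI_bound (mu : A -> R) (K : A -> B -> R) :
  is_distr mu -> (forall a b, 0 <= K a b <= 1) ->
  `|mutual_info mu K| <= #|B|%:R / ln 2.
Proof.
move=> [mu0 mu1] K01.
have K0 : forall a b, 0 <= K a b by move=> a b; case/andP: (K01 a b).
have o01 : forall b, 0 <= out_distr mu K b <= 1.
  move=> b; apply/andP; split; first by apply: sumr_ge0 => a _; rewrite mulr_ge0.
  rewrite -mu1; apply: ler_sum => a _; rewrite ler_piMr //.
  by case/andP: (K01 a b).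
have ln2p := @ln2_gt0.
rewrite ler_pdivlMr // -[X in _ * X]ger0_norm; last exact: ltW.
rewrite -normrM MI_ent // ler_norml.
have S1a : - #|B|%:R <= \sum_a mu a * \sum_b xlnx (K a b).
  have : \sum_a mu a * (- #|B|%:R) <= \sum_a mu a * \sum_b xlnx (K a b).
    apply: ler_sum => a _; apply: ler_wpM2l => //.
    rewrite -sumr_const -sumrN; apply: ler_sum => b _.
    by case/andP: (eta_bnd (K01 a b)).
  by rewrite -mulr_suml mu1 mul1r.
have S1b : \sum_a mu a * \sum_b xlnx (K a b) <= 0.
  apply: sumr_le0 => a _; apply: mulr_ge0_le0 => //.
  by apply: sumr_le0 => b _; case/andP: (eta_bnd (K01 a b)).
have S2a : - #|B|%:R <= \sum_b xlnx (out_distr mu K b).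
  rewrite -sumr_const -sumrN; apply: ler_sum => b _.
  by case/andP: (eta_bnd (o01 b)).
have S2b : \sum_b xlnx (out_distr mu K b) <= 0.
  by apply: sumr_le0 => b _; case/andP: (eta_bnd (o01 b)).
apply/andP; split; lra.
Qed.

End Info.
Section Info2.
Variable R : realType.

Lemma logsum (I : finType) (c x y : I -> R) :
  (forall i, 0 <= c i) -> (forall i, 0 <= x i) -> (forall i, 0 <= y i) ->
  (forall i, 0 < x i -> 0 < y i) ->
  F2 (\sum_i c i * x i) (\sum_i c i * y i) <= \sum_i c i * F2 (x i) (y i).
Proof.
move=> c0 x0 y0 xy.
set X := \sum_i c i * x i; set Y := \sum_i c i * y i.
have cx0 : forall i, 0 <= c i * x i by move=> i; rewrite mulr_ge0.
have [X0|Xn0] := eqVneq X 0.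
  rewrite /F2 X0 eqxx; apply: sumr_ge0 => i _.
  have := @psumr_eq0P R I predT (fun i => c i * x i) (fun i _ => cx0 i) X0 i isT.
  move/eqP; rewrite mulf_eq0 => /orP [/eqP ->|/eqP ->]; first by rewrite mul0r.
  by rewrite /F2 eqxx mulr0.
have Xp : 0 < X by rewrite lt_def Xn0 sumr_ge0.
have [i0 hi0] : exists i, 0 < c i * x i.
  apply: contrapT => hn; move/eqP: Xn0; apply; apply: big1 => i _.
  apply/eqP; rewrite eq_le cx0 andbT leNgt; apply/negP => h; apply: hn; by exists i.
have Yp : 0 < Y.
  have [cn xn] : c i0 != 0 /\ x i0 != 0.
    by move: hi0; rewrite lt0r mulf_eq0 negb_or => /andP [/andP [-> ->] _].
  have ci0 : 0 < c i0 by rewrite lt_def cn c0.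
  have xi0 : 0 < x i0 by rewrite lt_def xn x0.
  have : 0 < c i0 * y i0 by rewrite mulr_gt0 // xy.
  move=> h; apply: lt_le_trans h _; rewrite /Y (bigD1 i0) //= lerDl.
  by apply: sumr_ge0 => i _; rewrite mulr_ge0.
set q := X / Y.
have qp : 0 < q by rewrite divr_gt0.
have L := @ln2_gt0 R.
have term : forall i, c i * x i * log2 q + (c i * x i - c i * y i * q) / ln 2
                      <= c i * F2 (x i) (y i).
  move=> i; have [xi0|xin0] := eqVneq (x i) 0.
    rewrite /F2 xi0 eqxx !mulr0 !mul0r add0r sub0r mulNr oppr_le0.
    apply: divr_ge0; last exact: ltW.
    by apply: mulr_ge0; [exact: mulr_ge0 | exact: ltW].
  have xp : 0 < x i by rewrite lt_def xin0 x0.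
  have yp := xy _ xp.
  set r := x i / y i.
  have rp : 0 < r by rewrite divr_gt0.
  have hl := ln_ge1V (divr_gt0 rp qp).
  rewrite ln_div ?posrE // invf_div in hl.
  rewrite /F2 (negbTE xin0) /log2 -/r.
  have e : x i * (q / r) = y i * q.
    by rewrite /r; field; rewrite !gt_eqF.
  have hx : 0 <= c i * x i := cx0 i.
  have key : c i * x i * (1 - q / r) <= c i * x i * (ln r - ln q).
    exact: ler_wpM2l.
  have e2 : c i * x i * (1 - q / r) = c i * x i - c i * y i * q.
    rewrite mulrBr mulr1; congr (_ - _); by rewrite -[LHS]mulrA e mulrA.
  rewrite e2 mulrBr in key.
  have key2 : c i * x i * ln q + (c i * x i - c i * y i * q) <= c i * x i * ln r.
    lra.
  have L0 : ln 2 != 0 :> R by rewrite gt_eqF.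
  have -> : c i * x i * (ln q / ln 2) + (c i * x i - c i * y i * q) / ln 2 =
            (c i * x i * ln q + (c i * x i - c i * y i * q)) / ln 2 by field.
  have -> : c i * (x i * (ln r / ln 2)) = (c i * x i * ln r) / ln 2 by field.
  by rewrite ler_pM2r // invr_gt0.
have hs : \sum_i (c i * x i * log2 q + (c i * x i - c i * y i * q) / ln 2)
          <= \sum_i c i * F2 (x i) (y i).
  by apply: ler_sum => i _; exact: term.
rewrite big_split /= in hs.
have e1 : \sum_i c i * x i * log2 q = X * log2 q by rewrite -mulr_suml.
have e3 : \sum_i (c i * x i - c i * y i * q) / ln 2 = 0.
  rewrite -mulr_suml sumrB -mulr_suml -/X -/Y /q mulrCA mulfV ?gt_eqF //.
  by rewrite mulr1 subrr mul0r.
rewrite e1 e3 addr0 in hs.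
by rewrite /F2 (negbTE Xn0).
Qed.

Lemma eta_cont : continuous (@xlnx R).
Proof.
move=> x; have [xp|xn] := ltP 0 x.
  by apply: cvgM; [exact: cvg_id | exact: continuous_ln].
have [x0|xneg] := eqVneq x 0; last first.
  have xn' : x < 0 by rewrite lt_neqAle xneg xn.
  apply/cvgrPdist_lt => e e0; apply/nbhs_ballP; have nx : 0 < - x by rewrite oppr_gt0.
  exists (- x) => //.
  move=> y /= hy.
  have yn : y <= 0.
    move: hy; rewrite /ball /= => hy.
    have := ler_norm (x - y); have := ler_norm (y - x); rewrite distrC; lra.
  by rewrite /xlnx (ln0 yn) (ln0 (ltW xn')) !mulr0 subr0 normr0.
rewrite x0; apply/cvgrPdist_lt => e e0.
set d := Num.min 1 ((e / 2) ^+ 2).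
have d0 : 0 < d by rewrite lt_min ltr01 exprn_gt0 // divr_gt0.
apply/nbhs_ballP; exists d => // y /= hy.
move: hy; rewrite /ball /= sub0r normrN => hy.
rewrite /xlnx ln0 // mulr0 sub0r normrN.
have [yn|yp] := leP y 0; first by rewrite (ln0 yn) mulr0 normr0.
move: hy; rewrite gtr0_norm // lt_min => /andP [y1 yE].
rewrite ler0_norm; last by apply: eta_le0; rewrite ltW // ltW.
set s := Num.sqrt y.
have sp : 0 < s by rewrite sqrtr_gt0.
have ys : y = s ^+ 2 by rewrite sqr_sqrtr // ltW.
have hb : - (y * ln y) <= 2 * s.
  have si : 0 < s^-1 by rewrite invr_gt0.
  have hl := ln_sublinear si.
  rewrite lnV ?posrE // in hl.
  have h : s ^+ 2 * (- ln s) <= s ^+ 2 * s^-1.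
    by apply: ler_wpM2l; [exact: sqr_ge0 | exact: ltW].
  have e2 : s ^+ 2 * s^-1 = s by rewrite expr2 -mulrA mulfV ?gt_eqF // mulr1.
  rewrite e2 in h.
  have -> : - (y * ln y) = 2 * (s ^+ 2 * - ln s) by rewrite ys lnXn // mulr2n; ring.
  by rewrite ler_pM2l.
have hs : s < e / 2.
  have : s < Num.sqrt ((e / 2) ^+ 2) by rewrite ltr_sqrt // exprn_gt0 // divr_gt0.
  by rewrite sqrtr_sqr ger0_norm // divr_ge0 // ltW.
apply: le_lt_trans hb _; move: hs; lra.
Qed.

End Info2.
Section SupForm.
Variables (R : realType) (T : finType) (m n : nat) (M : T -> 'M[R]_(m,n)) (W : 'M[R]_(m,n)).
Local Notation LL := (LL M W).
Variables (U : Type) (P : U -> Prop) (g : U -> {ffun T -> R} -> R) (B : R).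
Hypothesis Pne : exists mu, P mu.
Hypothesis hb : forall mu l, P mu -> LL l -> `|g mu l| <= B.
Hypothesis hc : forall mu (u : nat -> {ffun T -> R}) x, P mu -> (forall k, LL (u k)) -> LL x ->
  (forall t, (fun k => u k t) @ \oo --> x t) -> (fun k => g mu (u k)) @ \oo --> g mu x.
Hypothesis hj : forall mu (I : finType) (c : I -> R) (p : I -> {ffun T -> R}), P mu ->
  (forall i, 0 <= c i) -> \sum_i c i = 1 -> (forall i, LL (p i)) ->
  g mu (\sum_i c i *: p i) <= \sum_i c i * g mu (p i).

Definition Csup l := sup [set v | exists mu, P mu /\ v = g mu l].

Lemma Csup_ub mu l : P mu -> LL l -> g mu l <= Csup l.
Proof.
move=> Pmu Ll; apply: ub_le_sup; last by exists mu.
exists B => _ [mu' [Pmu' ->]]; apply: le_trans (ler_norm _) (hb Pmu' Ll).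
Qed.

Lemma Csup_le l v : (forall mu, P mu -> g mu l <= v) -> Csup l <= v.
Proof.
move=> h; apply: ge_sup; first by case: Pne => mu Pmu; exists (g mu l), mu.
by move=> _ [mu [Pmu ->]]; apply: h.
Qed.

Lemma Csup_lb l : LL l -> - B <= Csup l.
Proof.
move=> Ll; case: Pne => mu Pmu; apply: le_trans (Csup_ub Pmu Ll).
by rewrite lerNl; apply: le_trans (hb Pmu Ll); rewrite -normrN ler_norm.
Qed.

Lemma Csup_J : Jensen M W Csup.
Proof.
move=> I c p c0 c1 Lp; apply: Csup_le => mu Pmu.
apply: le_trans (hj Pmu c0 c1 Lp) _; apply: ler_sum => i _.
by apply: ler_wpM2l => //; apply: Csup_ub.
Qed.

Lemma Csup_L : Lsc M W Csup.
Proof.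
move=> u x v Lu Lx ux hev; apply: Csup_le => mu Pmu.
apply: (lim_le_const (hc Pmu Lu Lx ux)) => e e0.
have := hev e e0; apply: filterS => k h; apply: le_trans h.
exact: Csup_ub.
Qed.

End SupForm.

Section Assemble.
Variables (R : realType) (T : finType) (m n : nat) (M : T -> 'M[R]_(m,n)) (W : 'M[R]_(m,n)).
Local Notation LL := (LL M W).
Variable C : {ffun T -> R} -> R.
Hypothesis LLne : exists x, LL x.

Lemma assemble : Jensen M W C -> Lsc M W C -> (exists B, forall l, LL l -> - B <= C l) ->
  (exists a b : R, a <= b /\ [set C l | l in LL] = [set x | a <= x <= b]) /\
  (exists l, is_vertex LL l /\ C l = sup [set C l | l in LL]).
Proof.
move=> HJ HL HB.
have [xm [Lxm hxm]] := min_exists LLne HL HB.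
have [v [[Lv vv] hv]] := max_vertex LLne HJ.
split.
  exists (C xm), (C v); split; first exact: hv.
  apply/seteqP; split => [_ [l Ll <-]|w hw]; first by rewrite /= hxm // hv.
  by have [l [Ll <-]] := ivt_C HJ HL Lxm Lv hw; exists l.
exists v; split; first by split.
apply/eqP; rewrite eq_le; apply/andP; split.
  by apply: ub_le_sup; [exists (C v) => _ [l Ll <-]; apply: hv | exists v].
by apply: ge_sup; [exists (C v), v | move=> _ [l Ll <-]; apply: hv].
Qed.

End Assemble.
Section Inst.
Variables (R : realType) (m n : nat).
Local Notation T := (detmap m n).
Local Notation MM := (fun D : T => detmx R D).
Local Notation LL := (LL MM).

Lemma detmx01 (D : T) x y : 0 <= detmx R D x y <= 1.
Proof. by rewrite mxE; case: eqP => _; rewrite ?lexx ?ler01. Qed.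

Lemma ln2n0 : ln 2 != 0 :> R.
Proof. by rewrite gt_eqF // ln2_gt0. Qed.

Definition g01 (mu : 'I_m -> R) (l : {ffun T -> R}) : R :=
  \sum_D l D * mutual_info mu (fun x y => detmx R D x y).

Lemma C01E l : C01 l = Csup (@is_distr R 'I_m) g01 l.
Proof. by []. Qed.

Lemma hb01 W mu (l : {ffun T -> R}) : is_distr mu -> LL W l -> `|g01 mu l| <= #|'I_n|%:R / ln 2.
Proof.
move=> dmu Ll; apply: le_trans (ler_norm_sum _ _ _) _.
apply: le_trans (_ : \sum_D l D * (#|'I_n|%:R / ln 2) <= _).
  apply: ler_sum => D _; rewrite normrM ger0_norm ?(LL_ge0 Ll) //.
  apply: ler_wpM2l; first exact: (LL_ge0 Ll).
  by apply: MI_bound => // x y; apply: detmx01.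
by rewrite -mulr_suml (LL_sum Ll) mul1r.
Qed.

Lemma hc01 mu (u : nat -> {ffun T -> R}) (x : {ffun T -> R}) :
  (forall t, (fun k => u k t) @ \oo --> x t) ->
  (fun k => g01 mu (u k)) @ \oo --> g01 mu x.
Proof.
move=> ux; apply: (cvg_sumR (FF := eventually_filter)) => D.
exact: (@cvgMr_tmp _ _ _ eventually_filter _ _ _ (ux D)).
Qed.

Lemma hj01 mu (I : finType) (c : I -> R) (p : I -> {ffun T -> R}) :
  g01 mu (\sum_i c i *: p i) = \sum_i c i * g01 mu (p i).
Proof.
rewrite /g01; under eq_bigr => D _ do rewrite sum_ffunE mulr_suml.
rewrite exchange_big /=; apply: eq_bigr => i _; rewrite mulr_sumr.
by apply: eq_bigr => D _; rewrite ffunE mulrA.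
Qed.

Definition g10 (mu : {ffun T -> 'I_m} -> R) (l : {ffun T -> R}) : R :=
  mutual_info mu (Vl l).

Lemma C10E l : C10 l = Csup (@is_distr R {ffun T -> 'I_m}) g10 l.
Proof. by []. Qed.

Lemma Vl_ge0 (l : {ffun T -> R}) : (forall D, 0 <= l D) -> forall u y, 0 <= Vl l u y.
Proof.
move=> l0 u y; apply: sumr_ge0 => D _; apply: mulr_ge0 => //.
by case/andP: (detmx01 D (u D) y).
Qed.

Lemma Vl01 W (l : {ffun T -> R}) : LL W l -> forall u y, 0 <= Vl l u y <= 1.
Proof.
move=> Ll u y; apply/andP; split; first by apply: Vl_ge0 => D; exact: (LL_ge0 Ll).
rewrite -(LL_sum Ll) /Vl.
apply: ler_sum => D _; rewrite ler_piMr ?(LL_ge0 Ll) //.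
by case/andP: (detmx01 D (u D) y).
Qed.

Lemma hb10 W mu (l : {ffun T -> R}) : is_distr mu -> LL W l -> `|g10 mu l| <= #|'I_n|%:R / ln 2.
Proof. by move=> dmu Ll; apply: MI_bound => //; apply: Vl01 Ll. Qed.

Lemma g10E mu (l : {ffun T -> R}) : (forall a, 0 <= mu a) -> (forall D, 0 <= l D) ->
  g10 mu l = (\sum_a mu a * \sum_b xlnx (Vl l a b)
              - \sum_b xlnx (out_distr mu (Vl l) b)) / ln 2.
Proof.
move=> mu0 l0; rewrite -MI_ent //; last exact: Vl_ge0.
by rewrite mulfK // ln2n0.
Qed.

Lemma Vl_cvg (u : nat -> {ffun T -> R}) (x : {ffun T -> R}) a y :
  (forall t, (fun k => u k t) @ \oo --> x t) ->
  (fun k => Vl (u k) a y) @ \oo --> Vl x a y.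
Proof.
move=> ux; apply: (cvg_sumR (FF := eventually_filter)) => D.
exact: (@cvgMr_tmp _ _ _ eventually_filter _ _ _ (ux D)).
Qed.

Lemma hc10 mu (u : nat -> {ffun T -> R}) (x : {ffun T -> R}) : (forall a, 0 <= mu a) ->
  (forall k D, 0 <= u k D) -> (forall D, 0 <= x D) ->
  (forall t, (fun k => u k t) @ \oo --> x t) ->
  (fun k => g10 mu (u k)) @ \oo --> g10 mu x.
Proof.
move=> mu0 u0 x0 ux.
have -> : (fun k => g10 mu (u k)) = fun k =>
   (\sum_a mu a * \sum_b xlnx (Vl (u k) a b)
    - \sum_b xlnx (out_distr mu (Vl (u k)) b)) / ln 2.
  by apply: funext => k; rewrite g10E.
rewrite g10E //.
apply: (@cvgMr_tmp _ _ _ eventually_filter); apply: cvgB.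
  apply: (cvg_sumR (FF := eventually_filter)) => a.
  apply: (@cvgMl_tmp _ _ _ eventually_filter).
  apply: (cvg_sumR (FF := eventually_filter)) => b.
  apply: (continuous_cvg _ (h := @xlnx R)); first exact: eta_cont.
  exact: Vl_cvg.
apply: (cvg_sumR (FF := eventually_filter)) => b.
apply: (continuous_cvg _ (h := @xlnx R)); first exact: eta_cont.
apply: (cvg_sumR (FF := eventually_filter)) => a.
apply: (@cvgMl_tmp _ _ _ eventually_filter).
exact: Vl_cvg.
Qed.

Lemma Vl_comb (I : finType) (c : I -> R) (p : I -> {ffun T -> R}) a y :
  Vl (\sum_i c i *: p i) a y = \sum_i c i * Vl (p i) a y.
Proof.
rewrite /Vl; under eq_bigr => D _ do rewrite sum_ffunE mulr_suml.
rewrite exchange_big /=; apply: eq_bigr => i _; rewrite mulr_sumr.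
by apply: eq_bigr => D _; rewrite ffunE mulrA.
Qed.

Lemma hj10 mu (I : finType) (c : I -> R) (p : I -> {ffun T -> R}) :
  (forall a, 0 <= mu a) -> (forall i, 0 <= c i) -> (forall i D, 0 <= p i D) ->
  g10 mu (\sum_i c i *: p i) <= \sum_i c i * g10 mu (p i).
Proof.
move=> mu0 c0 p0.
rewrite /g10 MI_F2.
under [X in _ <= X]eq_bigr => i _ do rewrite MI_F2 mulr_sumr.
rewrite [X in _ <= X]exchange_big /=; apply: ler_sum => a _.
under [X in _ <= X]eq_bigr => i _ do rewrite mulr_sumr.
rewrite [X in _ <= X]exchange_big /=; apply: ler_sum => b _.
have V0 : forall i a b, 0 <= Vl (p i) a b by move=> i; apply: Vl_ge0 => D; apply: p0.
have e1 : mu a * Vl (\sum_i c i *: p i) a b = \sum_i c i * (mu a * Vl (p i) a b).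
  by rewrite Vl_comb mulr_sumr; apply: eq_bigr => i _; rewrite mulrCA.
have e2 : mu a * out_distr mu (Vl (\sum_i c i *: p i)) b =
          \sum_i c i * (mu a * out_distr mu (Vl (p i)) b).
  rewrite /out_distr; under eq_bigr => a' _ do rewrite Vl_comb mulr_sumr.
  rewrite exchange_big /= mulr_sumr; apply: eq_bigr => i _.
  rewrite mulrCA; congr (_ * _); rewrite mulr_sumr; apply: eq_bigr => a' _.
  by rewrite mulrCA.
rewrite e1 e2; apply: logsum => // i.
- by rewrite mulr_ge0.
- by rewrite mulr_ge0 // sumr_ge0 // => a' _; rewrite mulr_ge0.
- move=> h; have := out_ge a b mu0 (V0 i); move=> ho.
  have mup : 0 < mu a.
    by rewrite lt_def mu0 andbT; apply/eqP => h0; move: h; rewrite h0 mul0r ltxx.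
  by apply: mulr_gt0 => //; exact: lt_le_trans h ho.
Qed.

Definition kap (D : T) : R := log2 (\rank (detmx R D))%:R.

Lemma C11_comb (I : finType) (c : I -> R) (p : I -> {ffun T -> R}) :
  C11 (\sum_i c i *: p i) = \sum_i c i * C11 (p i).
Proof.
rewrite /C11; under eq_bigr => D _ do rewrite sum_ffunE mulr_suml.
rewrite exchange_big /=; apply: eq_bigr => i _; rewrite mulr_sumr.
by apply: eq_bigr => D _; rewrite ffunE mulrA.
Qed.

End Inst.
Lemma pmass_distr (R : realType) (A : finType) (a0 : A) : is_distr (fun a => (a == a0)%:R : R).
Proof.
split; first by move=> a; rewrite ler0n.
by rewrite (bigD1 a0) //= eqxx big1 ?addr0 // => a /negbTE ->.
Qed.

Lemma Lam_ne (R : realType) (m n : nat) (W : 'M[R]_(m, n)) :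
  is_channel (fun x y => W x y) -> exists l, LL (fun D : detmap m n => detmx R D) W l.
Proof.
move=> hW.
have W0 : forall x y, 0 <= W x y by move=> x y; case: (hW x) => h _; exact: h.
have W1 : forall x, \sum_y W x y = 1 by move=> x; case: (hW x).
exists [ffun D : detmap m n => \prod_x W x (D x)]; split; first split.
- by move=> D; rewrite ffunE; apply: prodr_ge0 => x _.
- under eq_bigr => D _ do rewrite ffunE.
  rewrite -bigA_distr_bigA /=.
  by rewrite big1 // => x _; exact: W1.
- apply/matrixP => i j; rewrite summxE.
  pose G x y := if x == i then W x y * (y == j)%:R else W x y.
  have hG : forall D : detmap m n, \prod_x G x (D x) = \prod_x W x (D x) * (D i == j)%:R.
    move=> D; rewrite (bigD1 i) //= [in RHS](bigD1 i) //= /G eqxx.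
    have -> : \prod_(x < m | x != i) (if x == i then W x (D x) * (D x == j)%:R else W x (D x))
            = \prod_(x < m | x != i) W x (D x).
      by apply: eq_bigr => x /negbTE ->.
    by rewrite mulrAC.
  transitivity (\sum_(D : detmap m n) \prod_x G x (D x)); last first.
    by apply: eq_bigr => D _; rewrite hG ffunE !mxE.
  rewrite -bigA_distr_bigA /=.
  have hr : \prod_(x < m | x != i) \sum_y G x y = 1.
    by apply: big1 => x xi; rewrite /G (negbTE xi) W1.
  rewrite (bigD1 i) //= hr mulr1.
  rewrite /G eqxx (bigD1 j) //= eqxx mulr1 big1 ?addr0 //.
  by move=> y /negbTE ->; rewrite mulr0.
Qed.
Theorem theorem7 (R : realType) (m n : nat) (hm : (0 < m)%N) (hn : (0 < n)%N)
  (W : 'M[R]_(m, n)) (hW : is_channel (fun x y => W x y)) :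
  [/\ is_convex (Lam W) /\ is_closed (Lam W),
      is_bounded (Lam W), is_polytope (Lam W),
      (forall f : capf,
         (exists a b : R, a <= b /\ Cset f W = [set x | a <= x <= b]) /\
         (exists l, is_vertex (Lam W) l /\ Cf f l = Cup f W))
    & (exists l, is_vertex (Lam W) l /\ Cf f11 l = Clow f11 W)].
Proof.
pose MM := fun D : detmap m n => detmx R D.
have LLe : Lam W = LL MM W by [].
have LLne : exists l, LL MM W l := Lam_ne hW.
have Pne01 : exists mu : 'I_m -> R, is_distr mu.
  by exists (fun a => (a == Ordinal hm)%:R); apply: pmass_distr.
have hb01' : forall mu l, is_distr mu -> LL MM W l -> `|g01 mu l| <= #|'I_n|%:R / ln 2.
  by move=> mu l Pmu Ll; exact: hb01 Pmu Ll.
have hc01' : forall mu (u : nat -> {ffun detmap m n -> R}) x, is_distr mu ->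
    (forall k, LL MM W (u k)) -> LL MM W x -> (forall t, (fun k => u k t) @ \oo --> x t) ->
    (fun k => g01 mu (u k)) @ \oo --> g01 mu x.
  by move=> mu u x _ _ _ ux; exact: hc01.
have hj01' : forall mu (I : finType) (c : I -> R) (p : I -> {ffun detmap m n -> R}), is_distr mu ->
    (forall i, 0 <= c i) -> \sum_i c i = 1 -> (forall i, LL MM W (p i)) ->
    g01 mu (\sum_i c i *: p i) <= \sum_i c i * g01 mu (p i).
  by move=> mu I c p _ _ _ _; rewrite hj01.
have A01 := assemble LLne (Csup_J Pne01 hb01' hj01') (Csup_L Pne01 hb01' hc01')
  (ex_intro _ _ (Csup_lb Pne01 hb01')).
have Pne10 : exists mu : {ffun detmap m n -> 'I_m} -> R, is_distr mu.
  by exists (fun a => (a == [ffun=> Ordinal hm])%:R); apply: pmass_distr.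
have hb10' : forall mu l, is_distr mu -> LL MM W l -> `|g10 mu l| <= #|'I_n|%:R / ln 2.
  by move=> mu l Pmu Ll; exact: hb10 Pmu Ll.
have hc10' : forall mu (u : nat -> {ffun detmap m n -> R}) x, is_distr mu ->
    (forall k, LL MM W (u k)) -> LL MM W x -> (forall t, (fun k => u k t) @ \oo --> x t) ->
    (fun k => g10 mu (u k)) @ \oo --> g10 mu x.
  move=> mu u x [mu0 _] Lu Lx ux; apply: hc10 => //.
    by move=> k; exact: (LL_ge0 (Lu k)).
  exact: (LL_ge0 Lx).
have hj10' : forall mu (I : finType) (c : I -> R) (p : I -> {ffun detmap m n -> R}), is_distr mu ->
    (forall i, 0 <= c i) -> \sum_i c i = 1 -> (forall i, LL MM W (p i)) ->
    g10 mu (\sum_i c i *: p i) <= \sum_i c i * g10 mu (p i).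
  move=> mu I c p [mu0 _] c0 _ Lp; apply: hj10 => // i; exact: (LL_ge0 (Lp i)).
have A10 := assemble LLne (Csup_J Pne10 hb10' hj10') (Csup_L Pne10 hb10' hc10')
  (ex_intro _ _ (Csup_lb Pne10 hb10')).
have J11 : Jensen MM W (@C11 R m n).
  by move=> I c p _ _ _; rewrite C11_comb.
have RJ11 : RevJensen MM W (@C11 R m n).
  by move=> I c p _ _ _; rewrite C11_comb.
have L11 : Lsc MM W (@C11 R m n).
  move=> u x v Lu Lx ux hev; apply: (lim_le_const _ hev).
  apply: (cvg_sumR (FF := eventually_filter)) => D.
  exact: (@cvgMr_tmp _ _ _ eventually_filter _ _ _ (ux D)).
have B11 : exists B, forall l, LL MM W l -> - B <= C11 l.
  exists (\sum_(D : detmap m n) `|kap R D|) => l Ll; rewrite -sumrN; apply: ler_sum => D _.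
  have l0 := LL_ge0 Ll D; have l1 := LL_le1 Ll D.
  have h1 : `|l D * kap R D| <= `|kap R D|.
    by rewrite normrM ger0_norm // ler_piMl.
  have h2 := ler_norm (- (l D * kap R D)); rewrite normrN in h2.
  rewrite /kap in h1 h2 *; lra.
have A11 := assemble LLne J11 L11 B11.
split.
- by rewrite LLe; split; [exact: LL_convex | exact: LL_closed].
- by rewrite LLe; exact: LL_bounded.
- by rewrite LLe; exact: LL_polytope.
- by case; [exact: A10 | exact: A01 | exact: A11].
have [v [vv hv]] := min_vertex LLne RJ11.
exists v; split; first exact: vv.
rewrite /Clow /Cset /=; apply/eqP; rewrite eq_le; apply/andP; split.
  apply: lb_le_inf; first by exists (C11 v), v => //; case: vv.
  by move=> _ [l Ll <-]; apply: hv.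
apply: ge_inf; first by exists (C11 v) => _ [l Ll <-]; apply: hv.
by exists v => //; case: vv.
Qed.
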